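(* Let $k, \ell \in \mathbb{N}$ and let $T$ be a tournament on vertex set $V=Q_1\,\dot{\cup}\,\dots\, \dot{\cup}\, Q_\ell$ (a disjoint union), with $|Q_j|\geq k+1$ for all $j\in \{1,\dots ,\ell\}$. Suppose that for each $j\in \{1,\dots ,\ell\}$, $T[Q_j]$ is a backwards-transitive path. Then there exist sets $U, W, U', W'$ such that: (a) $U\subseteq U'\subseteq V(T)$ and $W\subseteq W'\subseteq V(T)$; (b) $|U|,|W|\leq 2k(k+1)$ and $|U'|=|W'|= \ell(k+1)$; (c) for any set $S\subseteq V(T)$ of size at most $k-1$ and every vertex $v\in V(T)\setminus S$, there exists a directed path (possibly of length $0$) in $T[(U'\cup \{v\})\setminus S]$ from $v$ to a vertex in $U$, and a directed path (possibly of length $0$) in $T[(W'\cup \{v\})\setminus S]$ from a vertex in $W$ to $v$.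
   Context: A tournament is an orientation of a complete graph; $T[U]$ denotes the subtournament induced by $U$. A non-empty tournament $Q$ is a backwards-transitive path if its vertices can be enumerated $q_1,\dots, q_{|Q|}$ such that there is an edge from $q_i$ to $q_j$ if and only if either $j=i+1$ or $i\geq j+2$. *)

(* Defs.v *)
From mathcomp Require Import all_boot.
Set Implicit Arguments. Unset Strict Implicit. Unset Printing Implicit Defensive.

Definition tournament (V : finType) (e : rel V) : Prop :=
  (forall x, ~~ e x x) /\
  (forall x y, x != y -> (e x y || e y x)) /\
  (forall x y, e x y -> ~~ e y x).

(* T[Q] is a backwards-transitive path: Q is non-empty and its vertices can be
   enumerated q_1,...,q_|Q| (here 0-indexed q : 'I_#|Q| -> V, a bijection onto Q)
   so that q_i -> q_j iff j = i+1 or i >= j+2. *)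
Definition bt_path (V : finType) (e : rel V) (Q : {set V}) : Prop :=
  0 < #|Q| /\
  exists q : 'I_#|Q| -> V,
    injective q /\ (forall i, q i \in Q) /\
    (forall i j : 'I_#|Q|, e (q i) (q j) = (j == i.+1 :> nat) || (j.+2 <= i)).

Definition dpath_to (V : finType) (e : rel V) (X : {set V}) (x : V) (Y : {set V}) : Prop :=
  exists p : seq V, [/\ path e x p, uniq (x :: p), all (mem X) (x :: p) & last x p \in Y].

Definition dpath_from (V : finType) (e : rel V) (X : {set V}) (Y : {set V}) (x : V) : Prop :=
  exists (y : V) (p : seq V),
    [/\ y \in Y, path e y p, uniq (y :: p), all (mem X) (y :: p) & last y p = x].

(* Main.v *)
Require Import Defs.
From mathcomp Require Import all_boot zify.
Set Implicit Arguments. Unset Strict Implicit. Unset Printing Implicit Defensive.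


Section Gen.
Variable V : finType.

Definition restr (Z : {set V}) (e : rel V) : rel V :=
  [rel a b | [&& a \in Z, b \in Z & e a b]].

Lemma connect_restr_in (Z : {set V}) (e : rel V) a b :
  connect (restr Z e) a b -> a \in Z -> b \in Z.
Proof.
move/connectP=> [p pth ->]; elim: p a pth => //= c p IH a /andP[/and3P[_ cZ _] pth] _.
exact: IH pth cZ.
Qed.

Lemma connect_restr_mono (Z Z' : {set V}) (e : rel V) : Z \subset Z' ->
  forall a b, connect (restr Z e) a b -> connect (restr Z' e) a b.
Proof.
move=> sZ; apply: connect_sub => a b /and3P[aZ bZ eab]; apply: connect1.
by rewrite /restr /= (subsetP sZ a aZ) (subsetP sZ b bZ).
Qed.

Lemma path_restr_all (Z : {set V}) (e : rel V) a p : path (restr Z e) a p -> all (mem Z) p.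
Proof.
elim: p a => //= c p IH a /andP[/and3P[_ cZ _] pth]; rewrite cZ /=; exact: IH pth.
Qed.

Lemma conn_path (Z : {set V}) (e : rel V) a b : connect (restr Z e) a b -> a \in Z ->
  exists p, [/\ path e a p, uniq (a :: p), all (mem Z) (a :: p) & last a p = b].
Proof.
move=> /connectP[p pth ->] aZ.
case: (shortenP pth) => p' pth' uq _.
exists p'; split => //.
- by apply: sub_path pth' => x y /and3P[].
- by rewrite /= aZ (path_restr_all pth').
Qed.

Lemma card_sum (A : {set V}) (P : pred V) :
  #|[set b in A | P b]| = \sum_(b in A) (P b : nat).
Proof.
rewrite -sum1_card big_mkcond [RHS]big_mkcond /=; apply: eq_bigr => b _.
by rewrite inE; case: (b \in A); case: (P b).
Qed.

Lemma od_sum (e : rel V) (A : {set V}) : tournament e ->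
  \sum_(a in A) #|[set b in A | e a b]| * 2 = #|A| * (#|A| - 1).
Proof.
move=> [irr [tot asym]].
have -> : \sum_(a in A) #|[set b in A | e a b]| * 2 =
   \sum_(a in A) \sum_(b in A) (e a b : nat) + \sum_(a in A) \sum_(b in A) (e b a : nat).
  rewrite [X in _ = _ + X](exchange_big) -big_split /=.
  apply: eq_bigr => a _; rewrite card_sum; lia.
rewrite -big_split /= -sum_nat_const; apply: eq_bigr => a aA.
rewrite -big_split /=.
have -> : \sum_(b in A) (e a b + e b a) = \sum_(b in A) ((a != b) : nat).
  apply: eq_bigr => b _; case: (eqVneq a b) => [->|ab].
    by rewrite (negbTE (irr b)).
  have := tot a b ab; have := asym a b; have := asym b a.
  by case: (e a b); case: (e b a) => //= /(_ isT).
rewrite -card_sum.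
have -> : [set b in A | a != b] = A :\ a by apply/setP => b; rewrite !inE eq_sym andbC.
by rewrite [in RHS](cardsD1 a A) aA add1n subn1.
Qed.

Lemma exists_low (e : rel V) (A : {set V}) : tournament e -> A != set0 ->
  exists2 a, a \in A & #|[set b in A | e a b]| * 2 < #|A|.
Proof.
move=> T A0; case: (boolP [exists a in A, #|[set b in A | e a b]| * 2 < #|A|]).
  by move/exists_inP => [a aA H]; exists a.
move/exists_inPn => H; exfalso.
have := od_sum A T.
have : \sum_(a in A) #|A| <= \sum_(a in A) #|[set b in A | e a b]| * 2.
  by apply: leq_sum => a aA; rewrite leqNgt H.
rewrite sum_nat_const => H1 H2; rewrite H2 in H1.
have : 0 < #|A| by rewrite card_gt0.
lia.
Qed.

Lemma exists_high (e : rel V) (A : {set V}) : tournament e -> A != set0 ->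
  exists2 a, a \in A & #|A| <= #|[set b in A | e a b]| * 2 + 1.
Proof.
move=> T A0; case: (boolP [exists a in A, #|A| <= #|[set b in A | e a b]| * 2 + 1]).
  by move/exists_inP => [a aA H]; exists a.
move/exists_inPn => H; exfalso.
have := od_sum A T.
have : \sum_(a in A) (#|[set b in A | e a b]| * 2 + 2) <= \sum_(a in A) #|A|.
  by apply: leq_sum => a aA; move: (H a aA); rewrite -ltnNge addn2 addn1.
rewrite sum_nat_const big_split /= sum_nat_const => H1 H2; rewrite H2 in H1.
have : 0 < #|A| by rewrite card_gt0.
nia.
Qed.

Lemma lowset (od : V -> nat) (X : {set V}) m : m <= #|X| ->
  exists U : {set V}, [/\ U \subset X, #|U| = m &
     forall u y, u \in U -> y \in X :\: U -> od u <= od y].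
Proof.
elim: m => [_|m IH H].
  by exists set0; split => //; [apply: sub0set | rewrite cards0 | move=> u y; rewrite inE].
have [U [sUX cU low]] := IH (ltnW H).
have : X :\: U != set0.
  rewrite -card_gt0 cardsD (setIidPr sUX) cU; lia.
case/set0Pn => x0 x0in.
case: (arg_minnP od x0in) => x xin0 xmin.
have xin : x \in X :\: U := xin0.
exists (x |: U); split.
- by rewrite subUset sub1set sUX andbT; move: xin; rewrite in_setD => /andP[_ ->].
- by rewrite cardsU1 cU; move: xin; rewrite in_setD => /andP[->].
- move=> u y; rewrite !inE => /orP[/eqP->|uU] /andP[/norP[yx yU] yX].
    have yin : y \in X :\: U by rewrite !inE yU yX.
    exact: xmin yin.
  by apply: low => //; rewrite !inE yU yX.
Qed.


Lemma arith a b c n s m p r k : a <= c -> b <= c -> n <= b -> c <= p + s ->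
  p * 2 < n -> m <= r * 2 + 1 -> r <= a -> m = 4 * k -> s < k -> False.
Proof. lia. Qed.

Lemma core (e : rel V) k (X : {set V}) : tournament e ->
  exists U : {set V}, [/\ U \subset X, #|U| <= 2 * k * k.+1 &
    forall (S : {set V}) x, #|S| < k -> x \in X :\: S ->
      exists2 u, u \in U & connect (restr (X :\: S) e) x u].
Proof.
move=> T; have T' := T; move: T' => [irr [tot asym]].
pose od x := #|[set z in X | e x z]|.
have [U [sUX cU low]] := lowset od (geq_minl #|X| (4 * k)).
exists U; split => //.
  rewrite cU; have := geq_minr #|X| (4 * k); nia.
move=> S x cS xY.
set Y := X :\: S.
have sYX : Y \subset X by apply: subsetDl.
pose R d := [set z | connect (restr Y e) d z].
have xA : x \in R x by rewrite inE connect0.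
case: (arg_minnP (fun d => #|R d|) xA) => d0 d0A0 mind0.
have d0A : connect (restr Y e) x d0.
  have h : d0 \in R x := d0A0. by move: h; rewrite inE.
set C := R d0.
have F1 : forall d, d \in C -> R d = C.
  move=> d dC; apply/eqP; rewrite eqEcard; apply/andP; split.
    apply/subsetP => z; rewrite !inE => dz; apply: connect_trans dz.
    by move: dC; rewrite inE.
  have dA : d \in R x by rewrite inE; apply: connect_trans d0A _; move: dC; rewrite inE.
  exact: mind0 dA.
have d0Y : d0 \in Y by apply: connect_restr_in d0A xY.
have F2 : C \subset Y.
  by apply/subsetP => z; rewrite inE => /connect_restr_in; apply.
have F3 : d0 \in C by rewrite inE connect0.
case: (boolP [exists u in U, u \in C]).
  move/exists_inP => [u uU uC]; exists u => //; apply: connect_trans d0A _.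
  by move: uC; rewrite inE.
move/exists_inPn => notUC; exfalso.
case: (leqP #|X| (4 * k)) => hX.
  have UX : U = X.
    apply/eqP; rewrite eqEcard sUX cU /=; move: hX; rewrite /minn; case: ifP; lia.
  have := notUC d0; rewrite UX (subsetP sYX _ d0Y) F3; by move/(_ isT).
have cU4 : #|U| = 4 * k by rewrite cU; move: hX; rewrite /minn; case: ifP; lia.
have : ~~ (U \subset S).
  apply/negP => /subset_leq_card; move: cS; rewrite cU4; move: #|S| #|U| => a b; clear; lia.
case/subsetPn => y yU yS.
have yY : y \in Y by rewrite inE yS (subsetP sUX _ yU).
have yC : y \notin C by apply: notUC.
have edges : forall d, d \in C -> e y d.
  move=> d dC; have yd : y != d by apply: contraNneq yC => ->.
  case/orP: (tot y d yd) => // edy; exfalso; move/negP: yC; apply.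
  rewrite -(F1 d dC) inE; apply: connect1; by rewrite /restr /= (subsetP F2 _ dC) yY edy.
have odyC : #|C| <= od y.
  apply: subset_leq_card; apply/subsetP => d dC.
  by rewrite inE (subsetP sYX _ (subsetP F2 _ dC)) edges.
have C0 : C != set0 by apply/set0Pn; exists d0.
have [d dC dlow] := exists_low T C0.
have oddC : od d <= #|[set b in C | e d b]| + #|S|.
  apply: (leq_trans _ (leq_card_setU _ _).1); apply: subset_leq_card.
  apply/subsetP => z; rewrite !inE => /andP[zX edz].
  case: (boolP (z \in S)) => zS; rewrite ?orbT //= orbF.
  have zC : z \in R d by rewrite inE; apply: connect1; rewrite /restr /= (subsetP F2 _ dC) !inE zX zS edz.
  by move: zC; rewrite (F1 d dC) inE => ->.
have dU : d \notin U by apply: contraTN dC => dU; apply: notUC.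
have lowd : forall u, u \in U -> od u <= od d.
  move=> u uU; apply: low => //; by rewrite inE dU (subsetP sYX _ (subsetP F2 _ dC)).
have U0 : U != set0.
  by rewrite -card_gt0 cU4 muln_gt0 /=; exact: leq_ltn_trans (leq0n _) cS.
have [u uU uhigh] := exists_high T U0.
have : #|[set b in U | e u b]| <= od u.
  apply: subset_leq_card; apply/subsetP => z; rewrite !inE => /andP[zU ->].
  by rewrite (subsetP sUX _ zU).
have h1 := lowd u uU; have h2 := lowd y yU.
move=> h3; exact: (arith h1 h2 odyC oddC dlow uhigh h3 cU4 cS).
Qed.

End Gen.
Lemma core2 (V : finType) (e : rel V) k (X : {set V}) : tournament e ->
  (forall v, v \notin X -> k <= #|[set w in X | e v w]|) ->
  exists U : {set V}, [/\ U \subset X, #|U| <= 2 * k * k.+1 &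
    forall (S : {set V}) v, #|S| < k -> v \notin S ->
      exists2 u, u \in U & connect (restr ((X :|: [set v]) :\: S) e) v u].
Proof.
move=> T hout; have [U [sUX cU H]] := core k X T.
exists U; split => // S v cS vS.
set Z := (X :|: [set v]) :\: S.
have sYZ : X :\: S \subset Z by apply: setSD; apply: subsetUl.
case: (boolP (v \in X)) => vX.
  have vY : v \in X :\: S by rewrite inE vS vX.
  have [u uU cu] := H S v cS vY.
  exists u => //. have hh := connect_restr_mono sYZ cu. exact hh.
have : ~~ ([set w in X | e v w] \subset S).
  apply/negP => /subset_leq_card; have := hout v vX; move: cS.
  move: #|S| #|[set w in X | e v w]| => a b; clear; lia.
case/subsetPn => w; rewrite inE => /andP[wX evw] wS.
have wY : w \in X :\: S by rewrite inE wS wX.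
have [u uU cu] := H S w cS wY.
exists u => //.
have cu' := connect_restr_mono sYZ cu.
have vw : connect (restr Z e) v w.
  apply: connect1; rewrite /restr /= !inE vS wS wX evw /= eqxx orbT; done.
exact: connect_trans vw cu'.
Qed.

Definition revr (V : finType) (e : rel V) : rel V := [rel a b | e b a].

Lemma tournament_rev (V : finType) (e : rel V) : tournament e -> tournament (revr e).
Proof.
move=> [irr [tot asym]]; split; [|split] => /=.
- exact: irr.
- by move=> x y xy; rewrite orbC; apply: tot.
- by move=> x y; apply: asym.
Qed.

Lemma bt_rev (V : finType) (e : rel V) (Q : {set V}) : bt_path e Q -> bt_path (revr e) Q.
Proof.
move=> [n0 [q [qinj [qQ qe]]]]; split => //.
exists (q \o (@rev_ord _)); split; [|split].
- by apply: inj_comp => //; apply: rev_ord_inj.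
- by move=> i; apply: qQ.
- move=> i j; rewrite /revr /= qe /=.
  have hi := ltn_ord i; have hj := ltn_ord j.
  apply/orP/orP => [[/eqP h|h]|[/eqP h|h]]; [left|right|left|right]; try apply/eqP; lia.
Qed.

Lemma part_sel (V : finType) (e : rel V) k (Q : {set V}) : bt_path e Q -> k.+1 <= #|Q| ->
  exists X : {set V}, [/\ X \subset Q, #|X| = k.+1 &
    forall v, v \in Q -> v \notin X -> k <= #|[set w in X | e v w]|].
Proof.
move=> [_ [q [qinj [qQ qe]]]] H.
pose f := fun i : 'I_k.+1 => q (widen_ord H i).
have finj : injective f.
  by move=> i j /qinj /(congr1 val) /= /val_inj.
exists (f @: [set: 'I_k.+1]); split.
- by apply/subsetP => _ /imsetP[i _ ->]; apply: qQ.
- by rewrite card_imset // cardsT card_ord.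
move=> v vQ vX.
have EQ : q @: [set: 'I_#|Q|] = Q.
  apply/eqP; rewrite eqEcard card_imset // cardsT card_ord leqnn andbT.
  by apply/subsetP => _ /imsetP[i _ ->]; exact: qQ.
rewrite -EQ in vQ; case/imsetP: vQ vX => i0 _ -> vX.
case: (ltnP i0 k.+1) => hi.
  exfalso; move/negP: vX; apply; apply/imsetP; exists (Ordinal hi) => //.
  by rewrite /f; congr q; apply: val_inj.
set X := f @: [set: 'I_k.+1].
set a := f ord_max.
have aX : a \in X by apply: imset_f.
have sub : X :\ a \subset [set w in X | e (q i0) w].
  apply/subsetP => w; rewrite in_setD1 => /andP[wa wX]; rewrite inE wX /=.
  case/imsetP: wX wa => i _ -> ia.
  have hik : i < k.
    have : i != ord_max by apply: contraNneq ia => ->.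
    have := ltn_ord i; move=> h1 h2; move: h2; rewrite -val_eqE /=; lia.
  rewrite /f qe /=; apply/orP; right; lia.
have := subset_leq_card sub; have := cardsD1 a X; rewrite aX card_imset // cardsT card_ord.
lia.
Qed.

Lemma bigl (V : finType) (e : rel V) k l (Q : 'I_l -> {set V}) :
  tournament e ->
  (forall i j, i != j -> [disjoint Q i & Q j]) ->
  (\bigcup_(j < l) Q j = [set: V]) ->
  (forall j, k.+1 <= #|Q j|) ->
  (forall j, bt_path e (Q j)) ->
  exists U U' : {set V}, [/\ U \subset U', #|U| <= 2 * k * k.+1, #|U'| = l * k.+1 &
    forall (S : {set V}) v, #|S| < k -> v \notin S ->
      exists2 u, u \in U & connect (restr ((U' :|: [set v]) :\: S) e) v u].
Proof.
move=> T hdis hcov hsz hbt.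
pose P j (X : {set V}) := [&& X \subset Q j, #|X| == k.+1 &
   [forall v, ((v \in Q j) && (v \notin X)) ==> (k <= #|[set w in X | e v w]|)]].
pose Xf j := odflt set0 [pick X | P j X].
have HP : forall j, P j (Xf j).
  move=> j; rewrite /Xf; case: pickP => [X //|none]; exfalso.
  have [X [s c h]] := part_sel (hbt j) (hsz j).
  have := none X; rewrite /= /P s c eqxx /= => /negbT/negP; apply.
  by apply/forallP => v; apply/implyP => /andP[]; exact: h.
pose U' := \bigcup_(j < l) Xf j.
have cU' : #|U'| = l * k.+1.
  rewrite -sum1_card partition_disjoint_bigcup.
    rewrite (eq_bigr (fun _ => k.+1)) ?sum_nat_const ?card_ord //.
    move=> j _; rewrite sum1_card; by case/and3P: (HP j) => _ /eqP.
  move=> i j ij; apply: disjointW (hdis i j ij).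
    by case/and3P: (HP i).
  by case/and3P: (HP j).
have hout : forall v, v \notin U' -> k <= #|[set w in U' | e v w]|.
  move=> v vU.
  have : v \in \bigcup_(j < l) Q j by rewrite hcov inE.
  case/bigcupP => j _ vQ.
  have vX : v \notin Xf j.
    by apply: contraNN vU => vX; apply/bigcupP; exists j.
  case/and3P: (HP j) => _ _ /forallP /(_ v) /implyP; rewrite vQ vX => /(_ isT) h.
  apply: leq_trans h _; apply: subset_leq_card; apply/subsetP => w.
  rewrite !inE => /andP[wX ->]; rewrite andbT; apply/bigcupP; by exists j.
have [U [sU cU H]] := core2 T hout.
by exists U, U'; split.
Qed.

Theorem lemma2p7 (k l : nat) (V : finType) (e : rel V) (Q : 'I_l -> {set V}) :
  tournament e ->
  (forall i j, i != j -> [disjoint Q i & Q j]) ->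
  (\bigcup_(j < l) Q j = [set: V]) ->
  (forall j, k.+1 <= #|Q j|) ->
  (forall j, bt_path e (Q j)) ->
  exists U W U' W' : {set V},
    [/\ U \subset U' /\ W \subset W',
        #|U| <= 2 * k * k.+1 /\ #|W| <= 2 * k * k.+1,
        #|U'| = l * k.+1 /\ #|W'| = l * k.+1 &
        forall (S : {set V}) (v : V), #|S| < k -> v \notin S ->
          dpath_to e ((U' :|: [set v]) :\: S) v U /\
          dpath_from e ((W' :|: [set v]) :\: S) W v].
Proof.
move=> T hdis hcov hsz hbt.
have [U [U' [sU cU cU' HU]]] := bigl T hdis hcov hsz hbt.
have hbt' : forall j, bt_path (revr e) (Q j) by move=> j; apply: bt_rev.
have [W [W' [sW cW cW' HW]]] := bigl (tournament_rev T) hdis hcov hsz hbt'.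
exists U, W, U', W'; split => // S v cS vS; split.
- have vZ : v \in (U' :|: [set v]) :\: S by rewrite !inE vS eqxx orbT.
  have [u uU cu] := HU S v cS vS.
  have [p [pth uq al lst]] := conn_path cu vZ.
  by exists p; split => //; rewrite lst.
- set Z := (W' :|: [set v]) :\: S.
  have vZ : v \in Z by rewrite !inE vS eqxx orbT.
  have [w wW cw] := HW S v cS vS.
  have wZ : w \in Z by apply: connect_restr_in cw vZ.
  have E : restr Z (revr e) =2 [rel a b | restr Z e b a].
    by move=> a b; rewrite /restr /revr /= andbA [(a \in Z) && _]andbC -andbA.
  rewrite (eq_connect E) connect_rev /= in cw.
  have [p [pth uq al lst]] := conn_path cw wZ.
  by exists w, p; split.
Qed.
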